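(* Let $i\ge 2$ and let $c_0,\dots,c_{i-1}$ be the vertices of a cycle, each with a positive weight $w(c_j)$. Run the following procedure (BalanceInCycle): initialize $b_{OPT}\gets 0$, a queue $Q_1$ empty and a queue $Q_2$ containing $c_0,c_1,\dots,c_{i-1}$ in this order (head $c_0$). Repeat the following iteration until $c_0$ becomes the head of $Q_1$ for the second time: update $b_{OPT}\gets\max\{b_{OPT},\min(w(Q_1),w(Q_2))\}$; then, if $w(Q_1)>w(Q_2)$, dequeue the head of $Q_1$ and append it to the tail of $Q_2$, otherwise dequeue the head of $Q_2$ and append it to the tail of $Q_1$. Then each vertex $c_j$ of the cycle is dequeued from $Q_1$ at least once during the procedure.
   Context: $w(Q)$ denotes the sum of the weights of the elements currently in queue $Q$. Queues are FIFO: elements are appended at the tail and removed at the head. *)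

(* Defs.v *)
From mathcomp Require Import all_boot all_order all_algebra.
Set Implicit Arguments. Unset Strict Implicit. Unset Printing Implicit Defensive.
Import Order.TTheory GRing.Theory Num.Theory.
Local Open Scope ring_scope.

(* Vertices c_0,...,c_{i-1} are represented by the naturals 0,...,i-1;
   a queue is a seq nat whose head (first element) is the head of the queue. *)

Definition wQ (R : numDomainType) (w : nat -> R) (q : seq nat) : R :=
  \sum_(x <- q) w x.

(* one iteration of BalanceInCycle on the pair (Q1, Q2)
   (the b_OPT update does not influence the queues) *)
Definition bal_step (R : numDomainType) (w : nat -> R) (s : seq nat * seq nat)
  : seq nat * seq nat :=
  let: (q1, q2) := s in
  if wQ w q2 < wQ w q1 then (behead q1, rcons q2 (head 0%N q1))
  else (rcons q1 (head 0%N q2), behead q2).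

Definition bal_state (R : numDomainType) (w : nat -> R) (i k : nat) :=
  iter k (bal_step w) ([::], iota 0 i).

(* c_0 becomes the head of Q1 at time t (i.e. as a result of iteration t-1) *)
Definition becomes_head (R : numDomainType) (w : nat -> R) (i t : nat) : bool :=
  [&& (0 < t)%N, ohead (bal_state w i t).1 == Some 0%N
    & ohead (bal_state w i t.-1).1 != Some 0%N].

(* iteration k (performed on state k) is executed by the procedure:
   c_0 has become head of Q1 fewer than two times at times 1..k *)
Definition executed (R : numDomainType) (w : nat -> R) (i k : nat) : bool :=
  (count (becomes_head w i) (iota 1 k) < 2)%N.

Definition dequeues_Q1 (R : numDomainType) (w : nat -> R) (i k j : nat) : bool :=
  let s := bal_state w i k in
  (wQ w s.2 < wQ w s.1) && (ohead s.1 == Some j).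

(* Main.v *)
Require Import Defs.
From mathcomp Require Import all_boot all_order all_algebra.
From mathcomp Require Import zify.
Import Order.TTheory GRing.Theory Num.Theory.
Local Open Scope ring_scope.

Definition seg (i a n : nat) : seq nat := map (fun x => (x %% i)%N) (iota a n).

Definition abstep {R : numDomainType} (w : nat -> R) (i : nat) (p : nat * nat)
  : nat * nat :=
  let: (a, l) := p in
  if wQ w (seg i (a + l) (i - l)) < wQ w (seg i a l) then (a.+1, l.-1)
  else (a, l.+1).

Definition abst {R : numDomainType} (w : nat -> R) (i k : nat) :=
  iter k (abstep w i) (0%N, 0%N).

Lemma wQ_ge0 {R : numDomainType} {w : nat -> R} {i : nat} :
  (forall j, (j < i)%N -> 0 < w j) -> (0 < i)%N ->
  forall a n, 0 <= wQ w (seg i a n).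
Proof.
move=> Hw Hi a n; rewrite /wQ /seg big_map; apply: sumr_ge0 => x _.
by apply: ltW; apply: Hw; rewrite ltn_pmod.
Qed.

Lemma wQ_gt0 {R : numDomainType} {w : nat -> R} {i : nat} :
  (forall j, (j < i)%N -> 0 < w j) -> (0 < i)%N ->
  forall a n, (0 < n)%N -> 0 < wQ w (seg i a n).
Proof.
move=> Hw Hi a [|n] // _.
have := wQ_ge0 Hw Hi a.+1 n.
rewrite /wQ /seg /= big_cons => H.
apply: (lt_le_trans (Hw _ (ltn_pmod a Hi))); by rewrite lerDl.
Qed.

Lemma seg_rcons i a n : rcons (seg i a n) ((a + n) %% i)%N = seg i a n.+1.
Proof. by rewrite /seg -addn1 iotaD map_cat cats1. Qed.

Lemma seg_behead i a n : behead (seg i a n.+1) = seg i a.+1 n.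
Proof. by []. Qed.

Lemma seg_head i a n : head 0%N (seg i a n.+1) = (a %% i)%N.
Proof. by []. Qed.

Lemma ohead_seg i a n : ohead (seg i a n) = if n is _.+1 then Some (a %% i)%N else None.
Proof. by case: n. Qed.

Lemma inv {R : numDomainType} {w : nat -> R} {i : nat} :
  (forall j, (j < i)%N -> 0 < w j) -> (0 < i)%N ->
  forall k, let p := abst w i k in
  [/\ (p.2 <= i)%N,
      bal_state w i k = (seg i p.1 p.2, seg i (p.1 + p.2) (i - p.2))
    & (2 * p.1 + p.2 = k)%N].
Proof.
move=> Hw Hi; elim=> [|k IH] /=.
  have E : seg i 0 i = iota 0 i.
    rewrite /seg map_id_in // => x; rewrite mem_iota add0n => /andP[_ H].
    by rewrite modn_small.
  by rewrite /bal_state /= subn0 E.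
move: IH; rewrite /bal_state /abst /=.
case: (iter k (abstep w i) (0%N, 0%N)) => a l /= [Hl -> Hk].
rewrite /abstep /bal_step.
case: ifP => Hc /=.
  have Hl0 : (0 < l)%N.
    case: l Hl Hk Hc => [|l] //= _ _; rewrite /wQ /seg /= big_nil.
    by move=> H; have := le_lt_trans (wQ_ge0 Hw Hi _ _) H; rewrite ltxx.
  case: l Hl Hk Hc Hl0 => [|l] // Hl Hk Hc _ /=.
  split; [lia | | lia].
  change [seq _ | x <- iota a.+1 l] with (seg i a.+1 l).
  have -> : (a %% i = (a + l.+1 + (i - l.+1)) %% i)%N.
    have -> : (a + l.+1 + (i - l.+1) = a + i)%N by lia.
    by rewrite modnDr.
  rewrite seg_rcons; congr (_, seg _ _ _); lia.
have Hli : (l < i)%N.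
  rewrite ltn_neqAle Hl andbT; apply/eqP => E; subst l.
  move: Hc; rewrite subnn /wQ /seg /= big_nil.
  by have := wQ_gt0 Hw Hi a i Hi; rewrite /wQ /seg => ->.
have E : (i - l = (i - l.+1).+1)%N by lia.
split; [lia | | lia].
rewrite E seg_head seg_rcons seg_behead; congr (_, seg _ _ _); lia.
Qed.

Lemma step_cases {R : numDomainType} (w : nat -> R) i k :
  let p := abst w i k in
  (wQ w (seg i (p.1 + p.2) (i - p.2)) < wQ w (seg i p.1 p.2)
     /\ abst w i k.+1 = (p.1.+1, p.2.-1))
  \/ (abst w i k.+1 = (p.1, p.2.+1)).
Proof.
rewrite /abst iterS; case: (iter k (abstep w i) (0%N, 0%N)) => a l /=.
rewrite /abstep; case: ifP => Hc; [by left | by right].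
Qed.

Lemma A_step {R : numDomainType} (w : nat -> R) i k :
  ((abst w i k).1 <= (abst w i k.+1).1 <= (abst w i k).1.+1)%N.
Proof.
by case: (step_cases w i k) => [[_ ->]|->] /=; rewrite ?leqnn ?leqnSn.
Qed.

Lemma A_mono {R : numDomainType} (w : nat -> R) i m n :
  (m <= n)%N -> ((abst w i m).1 <= (abst w i n).1)%N.
Proof.
move=> H; apply: (homo_leq (f := fun k => (abst w i k).1) (r := leq)) => //.
- by move=> y x z; apply: leq_trans.
- by move=> k; case/andP: (A_step w i k).
Qed.


Theorem lemma4 (R : realFieldType) (i : nat) (w : nat -> R) :
  (2 <= i)%N ->
  (forall j, (j < i)%N -> 0 < w j) ->
  forall j, (j < i)%N ->
    exists k, executed w i k /\ dequeues_Q1 w i k j.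
Proof.
move=> Hi2 Hw j Hj.
have Hi : (0 < i)%N by lia.
pose A k := (abst w i k).1.
have exP : exists k, (j < A k)%N.
  exists (3 * i)%N; have [H1 _ H3] := inv Hw Hi (3 * i); rewrite /A; lia.
pose m := ex_minn exP.
have Pm : (j < A m)%N by rewrite /m; case: ex_minnP.
have Mm : forall n, (j < A n)%N -> (m <= n)%N by rewrite /m; case: ex_minnP.
have m0 : (0 < m)%N by case: m Pm {Mm} => //.
pose k := m.-1.
have Em : m = k.+1 by rewrite /k prednK.
have Ak : (A k <= j)%N.
  rewrite leqNgt; apply/negP => /Mm; lia.
have HAk : A k = j /\ A k.+1 = j.+1.
  have := A_step w i k; rewrite -/(A k) -/(A k.+1) -Em; lia.
case: HAk => Akj Ak1.
exists k; split.
-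
  have NB : forall t, (2 <= t)%N -> (t <= k)%N -> ~~ becomes_head w i t.
    move=> t Ht2 Htk; rewrite /becomes_head.
    have At : (A t <= j)%N by rewrite -Akj; apply: A_mono.
    have [_ -> _] := inv Hw Hi t.
    rewrite ohead_seg /=.
    case El : (abst w i t).2 => [|l] //=; rewrite ?andbF //.
    case: eqP => [[H0]|_]; last by rewrite andbF.
    rewrite (leq_trans _ Ht2) //=.
    have At0 : A t = 0%N.
      by move: H0; rewrite modn_small /A //; move: At; rewrite /A; lia.
    have At1 : A t.-1 = 0%N.
      have := A_mono w i _ _ (leq_pred t); rewrite -/(A t) -/(A t.-1); lia.
    have [_ -> H3] := inv Hw Hi t.-1.
    rewrite ohead_seg.
    case El2 : (abst w i t.-1).2 => [|l2] /=.
      by move: H3; rewrite El2 -/(A t.-1) At1; lia.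
    by move: At1; rewrite /A => ->; rewrite mod0n eqxx.
  rewrite /executed.
  case: k NB {Em Akj Ak1 Ak} => [|k'] NB //=.
  have -> : count (becomes_head w i) (iota 2 k') = 0%N.
    apply/eqP; rewrite -leqn0 leqNgt -has_count; apply/hasP => [[t]].
    rewrite mem_iota => /andP[H1 H2] Hb.
    by move: (NB t H1 (ltac:(lia))); rewrite Hb.
  by case: (becomes_head w i 1).
- rewrite /dequeues_Q1.
  case: (step_cases w i k) => [[Hc Hs]|Hs]; last first.
    by move: Ak1; rewrite /A Hs /= -/(A k) Akj; lia.
  have [_ -> _] := inv Hw Hi k; rewrite /= Hc /= ohead_seg.
  case El : (abst w i k).2 => [|l].
    move: Hc; rewrite El /wQ /seg /= big_nil.
    have := wQ_ge0 Hw Hi ((abst w i k).1 + 0) (i - 0); rewrite /wQ /seg => H.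
    by rewrite ltNge H.
  by rewrite -/(A k) Akj modn_small.
Qed.
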